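(* Let $\ket{\psi}$ be an $n$-qubit pure state with CP rank $\mathrm{rk}(\ket{\psi})=R$. Then $$\mathcal{C}(\ket{\psi})\le 1-\frac{1}{2^n}\sum_{k=0}^n\binom{n}{k}\max\Big(\frac1R,\;2^{-\min(k,n-k)}\Big).$$
   Context: The CP rank (tensor rank) $\mathrm{rk}(\ket{\psi})$ of an $n$-qubit state is the minimal $r$ such that $\ket{\psi}=\sum_{i=1}^r c_i\bigotimes_{j=1}^n\ket{\phi_i^{(j)}}$ with single-qubit vectors $\ket{\phi_i^{(j)}}$. The concentratable entanglement is $\mathcal{C}(\ket{\psi})=1-\frac{1}{2^{n}}\sum_{\alpha\subseteq [n]}\mathrm{Tr}[\rho_\alpha^2]$, where $\rho_\alpha$ is the reduced density matrix of $\ket{\psi}$ on the qubits in $\alpha$, with $\mathrm{Tr}[\rho_\emptyset^2]=1$. *)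

(* Defs.v *)
From HB Require Import structures.
From mathcomp Require Import all_boot all_order all_algebra.
From mathcomp Require Import reals.
From mathcomp Require Export complex.
Set Implicit Arguments. Unset Strict Implicit. Unset Printing Implicit Defensive.
Import Order.TTheory GRing.Theory Num.Theory.
Local Open Scope ring_scope.

Section QubitDefs.
Variable R : realType.
Local Notation C := R[i].

Definition bitstr (n : nat) := {ffun 'I_n -> bool}.

(* an n-qubit (unnormalised) vector: amplitudes on the computational basis *)
Definition qvec (n : nat) := {ffun bitstr n -> C}.

Definition normalized n (psi : qvec n) : Prop :=
  \sum_(x : bitstr n) `|psi x| ^+ 2 = 1.

Definition has_cp_decomp n (psi : qvec n) (r : nat) : Prop :=
  exists (c : 'I_r -> C) (phi : 'I_r -> 'I_n -> bool -> C),
    forall x : bitstr n, psi x = \sum_(i < r) c i * \prod_(j < n) phi i j (x j).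

Definition is_cp_rank n (psi : qvec n) (r : nat) : Prop :=
  has_cp_decomp psi r /\ (forall r', has_cp_decomp psi r' -> (r <= r')%N).

Definition glue n (alpha : {set 'I_n}) (u v : bitstr n) : bitstr n :=
  [ffun j => if j \in alpha then u j else v j].

(* basis strings of the subsystem alpha, represented canonically by full
   strings that are [false] outside alpha *)
Definition supp_in n (alpha : {set 'I_n}) (u : bitstr n) : bool :=
  [forall j, (j \notin alpha) ==> ~~ u j].

(* reduced density matrix rho_alpha = Tr_{complement of alpha} |psi><psi| ,
   entries <u|rho_alpha|v> for u, v basis strings of alpha *)
Definition rdm n (psi : qvec n) (alpha : {set 'I_n}) (u v : bitstr n) : C :=
  \sum_(z : bitstr n | supp_in (~: alpha) z)
     psi (glue alpha u z) * (psi (glue alpha v z))^*.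

Definition purity n (psi : qvec n) (alpha : {set 'I_n}) : C :=
  \sum_(u : bitstr n | supp_in alpha u) \sum_(v : bitstr n | supp_in alpha v)
     rdm psi alpha u v * rdm psi alpha v u.

Definition conc_ent n (psi : qvec n) : C :=
  1 - (2 ^+ n)^-1 * \sum_(alpha : {set 'I_n}) purity psi alpha.

Definition ce_bound (n r : nat) : R :=
  1 - (2 ^+ n)^-1 * \sum_(0 <= k < n.+1)
        ('C(n, k))%:R * Num.max (r%:R)^-1 ((2 ^+ minn k (n - k))^-1).

End QubitDefs.

(* Main.v *)
Require Import Defs.
From HB Require Import structures.
From mathcomp Require Import all_boot all_order all_algebra.
From mathcomp Require Import reals complex spectral sesquilinear.
Import Order.TTheory GRing.Theory Num.Theory.
Local Open Scope ring_scope.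
Local Open Scope sesquilinear_scope.

Section Mx.
Variable C : numClosedFieldType.

Lemma cs_sum (I : finType) (S : {set I}) (a : I -> C) :
  (forall j, 0 <= a j) ->
  (\sum_(j in S) a j) ^+ 2 <= #|S|%:R * \sum_(j in S) a j ^+ 2.
Proof.
move=> a0.
have pt : forall j k, a j * a k *+ 2 <= a j ^+ 2 + a k ^+ 2.
  move=> j k; rewrite -subr_ge0.
  have : 0 <= (a j - a k) ^+ 2 by rewrite -realEsqr realB // ger0_real.
  by rewrite sqrrB addrAC.
have h2 : (0 : C) < 2%:R by rewrite ltr0n.
rewrite -(ler_pM2l h2).
have -> : 2%:R * (\sum_(j in S) a j) ^+ 2 = \sum_(j in S) \sum_(k in S) a j * a k *+ 2.
  rewrite expr2 mulr_suml mulr_natl -sumrMnl; apply: eq_bigr => j _.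
  by rewrite mulr_sumr -sumrMnl.
have -> : 2%:R * (#|S|%:R * \sum_(j in S) a j ^+ 2) =
   \sum_(j in S) \sum_(k in S) (a j ^+ 2 + a k ^+ 2).
  rewrite mulr_natl mulr2n.
  rewrite [RHS](eq_bigr (fun j => \sum_(k in S) a j ^+ 2 + \sum_(k in S) a k ^+ 2)); last first.
    by move=> j _; rewrite big_split.
  rewrite big_split /=; congr (_ + _).
    rewrite mulr_sumr; apply: eq_bigr => j _.
    by rewrite sumr_const mulr_natl.
  by rewrite sumr_const mulr_natl.
by apply: ler_sum => j _; apply: ler_sum => k _; apply: pt.
Qed.

Lemma tr_bound p q (X : 'M[C]_(p,q)) (S : {set 'I_q}) :
  (forall i j, j \notin S -> X i j = 0) ->
  (\tr (X^t* *m X)) ^+ 2 <= #|S|%:R * \tr ((X^t* *m X) *m (X^t* *m X)).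
Proof.
move=> X0; set K := X^t* *m X.
have KE j k : K j k = \sum_i (X i j)^* * X i k.
  by rewrite !mxE; apply: eq_bigr => i _; rewrite !mxE.
have Kc j k : K k j = (K j k)^*.
  rewrite !KE rmorph_sum; apply: eq_bigr => i _.
  by rewrite rmorphM /= conjCK mulrC.
have Kd j : K j j = \sum_i `|X i j| ^+ 2.
  by rewrite KE; apply: eq_bigr => i _; rewrite normCK mulrC.
have Kd0 j : 0 <= K j j.
  by rewrite Kd; apply: sumr_ge0 => i _; rewrite exprn_ge0.
have KS j : j \notin S -> K j j = 0.
  by move=> jS; rewrite Kd big1 // => i _; rewrite X0 // normr0 expr0n.
have trK : \tr K = \sum_(j in S) K j j.
  rewrite /mxtrace (bigID (mem S)) /= [X in _ + X]big1 ?addr0 //.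
have trKK : \sum_(j in S) K j j ^+ 2 <= \tr (K *m K).
  have -> : \tr (K *m K) = \sum_j \sum_k `|K j k| ^+ 2.
    rewrite /mxtrace; apply: eq_bigr => j _; rewrite mxE; apply: eq_bigr => k _.
    by rewrite (Kc j k) normCK.
  apply: (@le_trans _ _ (\sum_j K j j ^+ 2)).
    rewrite [X in _ <= X](bigID (mem S)) /= lerDl sumr_ge0 // => j _.
    by rewrite exprn_ge0.
  apply: ler_sum => j _; rewrite (bigD1 j) //= ger0_norm // lerDl.
  by rewrite sumr_ge0 // => k _; rewrite exprn_ge0.
rewrite trK; apply: le_trans (@cs_sum _ S (fun j => K j j) Kd0) _.
by rewrite ler_wpM2l // -trK.
Qed.

Lemma trC_mul m n p (A : 'M[C]_(m, n)) (B : 'M[C]_(n, p)) :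
  (A *m B)^t* = B^t* *m A^t*.
Proof. by rewrite trmx_mul map_mxM. Qed.

Lemma tr_cyc m n (A : 'M[C]_(m, n)) (B : 'M[C]_(n, m)) :
  \tr ((A *m B) *m (A *m B)) = \tr ((B *m A) *m (B *m A)).
Proof. by rewrite mulmxA mxtrace_mulC !mulmxA. Qed.

Lemma rank_bound p q (M : 'M[C]_(p,q)) : \tr (M *m M^t*) = 1 ->
  1 <= (\rank M)%:R * \tr ((M *m M^t*) *m (M *m M^t*)).
Proof.
move=> tr1.
set E := schmidt (row_base M).
have Eu : E \is unitarymx by apply: schmidt_unitarymx; exact: rank_leq_col.
have : (M <= E)%MS.
  apply: submx_trans (schmidt_sub _); by rewrite eq_row_base.
case/submxP => D MDE.
have MM : M *m M^t* = D *m D^t*.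
  transitivity ((D *m E) *m (D *m E)^t*); first by rewrite -MDE.
  by rewrite trC_mul mulmxA mulmxtVK.
rewrite MM in tr1 *.
have := @tr_bound _ _ D setT (fun i j => ltac:(by rewrite inE)).
rewrite cardsT card_ord mxtrace_mulC tr1 expr1n.
by rewrite tr_cyc.
Qed.

Lemma col_bound p q (M : 'M[C]_(p,q)) (S : {set 'I_q}) :
  (forall i j, j \notin S -> M i j = 0) -> \tr (M *m M^t*) = 1 ->
  1 <= #|S|%:R * \tr ((M *m M^t*) *m (M *m M^t*)).
Proof.
move=> M0 tr1.
have := @tr_bound _ _ M S M0.
by rewrite mxtrace_mulC tr1 expr1n tr_cyc.
Qed.

Lemma row_bound p q (M : 'M[C]_(p,q)) (S : {set 'I_p}) :
  (forall i j, i \notin S -> M i j = 0) -> \tr (M *m M^t*) = 1 ->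
  1 <= #|S|%:R * \tr ((M *m M^t*) *m (M *m M^t*)).
Proof.
move=> M0 tr1.
have X0 : forall i j, j \notin S -> (M^t*) i j = 0.
  by move=> i j jS; rewrite !mxE M0 // rmorph0.
have := @tr_bound _ _ (M^t*) S X0.
by rewrite trmxCK tr1 expr1n.
Qed.
End Mx.

Section Bridge.
Variable R : realType.
Local Notation C := R[i].
Variable n : nat.
Local Notation T := (bitstr n).
Local Notation N := #|{ffun 'I_n -> bool}|.

Lemma sum_ev (F : T -> C) : \sum_(i < N) F (enum_val i) = \sum_(x : T) F x.
Proof.
rewrite [RHS](reindex (fun i : 'I_N => enum_val i : T)) //=.
by apply: onW_bij; apply: enum_val_bij.
Qed.

Variable psi : qvec R n.
Variable alpha : {set 'I_n}.

Definition Mx : 'M[C]_(N, N) := \matrix_(i, j)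
  (if supp_in alpha (enum_val i) && supp_in (~: alpha) (enum_val j)
   then psi (glue alpha (enum_val i) (enum_val j)) else 0).

Lemma MM_E (u v : T) : (Mx *m Mx^t*) (enum_rank u) (enum_rank v) =
  if supp_in alpha u && supp_in alpha v then rdm psi alpha u v else 0.
Proof.
rewrite mxE; under eq_bigr => j _ do rewrite !mxE !enum_rankK.
case: (boolP (supp_in alpha u)) => su /=; last first.
  by rewrite big1 // => j _; rewrite mul0r.
case: (boolP (supp_in alpha v)) => sv /=; last first.
  by rewrite big1 // => j _; rewrite rmorph0 mulr0.
rewrite /rdm [RHS]big_mkcond -sum_ev; apply: eq_bigr => j _.
by case: (supp_in (~: alpha) (enum_val j)) => /=; rewrite ?rmorph0 ?mulr0.
Qed.

Lemma purity_tr : purity psi alpha = \tr ((Mx *m Mx^t*) *m (Mx *m Mx^t*)).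
Proof.
rewrite /purity /mxtrace.
transitivity (\sum_(u : T) \sum_(v : T) (Mx *m Mx^t*) (enum_rank u) (enum_rank v)
   * (Mx *m Mx^t*) (enum_rank v) (enum_rank u)).
  rewrite big_mkcond; apply: eq_bigr => u _.
  case: (boolP (supp_in alpha u)) => su /=; last first.
    by rewrite big1 // => v _; rewrite !MM_E (negbTE su) mul0r.
  rewrite big_mkcond; apply: eq_bigr => v _; rewrite !MM_E su.
  by case: (supp_in alpha v) => /=; rewrite ?mul0r.
rewrite -sum_ev; apply: eq_bigr => i _; rewrite -sum_ev mxE; apply: eq_bigr => k _.
by rewrite !enum_valK.
Qed.

Definition restr (A : {set 'I_n}) (x : T) : T := [ffun j => if j \in A then x j else false].

Lemma restr_id A z : (restr A z == z) = supp_in A z.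
Proof.
apply/eqP/forallP.
  by move=> <- j; rewrite ffunE; case: (j \in A).
move=> h; apply/ffunP=> j; rewrite ffunE; case: ifP => // jA.
by have := h j; rewrite jA /= => /negbTE ->.
Qed.

Lemma glue_sum (F : T -> C) :
  \sum_(u | supp_in alpha u) \sum_(z | supp_in (~:alpha) z) F (glue alpha u z)
  = \sum_x F x.
Proof.
rewrite [RHS](partition_big (restr alpha) (supp_in alpha)); last first.
  by move=> x _; rewrite -restr_id; apply/eqP/ffunP => j; rewrite !ffunE; case: (j \in alpha).
apply: eq_bigr => u su.
rewrite [RHS](reindex_onto (glue alpha u) (restr (~:alpha))); last first.
  move=> x /= /eqP <-; apply/ffunP => j; rewrite !ffunE inE.
  by case: (j \in alpha).
apply: eq_bigl => z /=.
have -> : restr alpha (glue alpha u z) = u.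
  move: su; rewrite -restr_id => /eqP {2}<-.
  by apply/ffunP => j; rewrite !ffunE; case: (j \in alpha).
rewrite eqxx /=.
have -> : restr (~: alpha) (glue alpha u z) = restr (~: alpha) z.
  by apply/ffunP => j; rewrite !ffunE inE; case: (j \in alpha).
by rewrite restr_id.
Qed.

Lemma tr_MM : \tr (Mx *m Mx^t*) = \sum_x `|psi x| ^+ 2.
Proof.
transitivity (\sum_(u : T) (Mx *m Mx^t*) (enum_rank u) (enum_rank u)).
  by rewrite /mxtrace -sum_ev; apply: eq_bigr => i _; rewrite enum_valK.
under eq_bigr => u _ do rewrite MM_E andbb.
rewrite -big_mkcond /= -glue_sum; apply: eq_bigr => u _.
by rewrite /rdm; apply: eq_bigr => z _; rewrite normCK.
Qed.


Lemma rank_Mx r : has_cp_decomp psi r -> (\rank Mx <= r)%N.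
Proof.
case=> c [phi hpsi].
pose A : 'M[C]_(N, r) := \matrix_(i, k) (if supp_in alpha (enum_val i)
   then c k * \prod_(j | j \in alpha) phi k j (enum_val i j) else 0).
pose B : 'M[C]_(r, N) := \matrix_(k, l) (if supp_in (~:alpha) (enum_val l)
   then \prod_(j | j \notin alpha) phi k j (enum_val l j) else 0).
have -> : Mx = A *m B.
  apply/matrixP => i l; rewrite !mxE; under eq_bigr do rewrite !mxE.
  case: (supp_in alpha (enum_val i)) => /=; last first.
    by rewrite big1 // => k _; rewrite mul0r.
  case: (supp_in (~: alpha) (enum_val l)) => /=; last first.
    by rewrite big1 // => k _; rewrite mulr0.
  rewrite hpsi; apply: eq_bigr => k _.
  rewrite (bigID (fun j => j \in alpha)) /= mulrA; congr (_ * _ * _).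
    by apply: eq_bigr => j jA; rewrite ffunE jA.
  by apply: eq_bigr => j jA; rewrite ffunE (negbTE jA).
by apply: leq_trans (mxrankM_maxl _ _) (rank_leq_col _).
Qed.

Lemma Mx_row0 i j : i \notin [set i : 'I_N | supp_in alpha (enum_val i)] -> Mx i j = 0.
Proof. by rewrite inE mxE => /negbTE ->. Qed.

Lemma Mx_col0 i j : j \notin [set j : 'I_N | supp_in (~: alpha) (enum_val j)] -> Mx i j = 0.
Proof. by rewrite inE mxE => /negbTE ->; rewrite andbF. Qed.

End Bridge.

Lemma card_supp n (A : {set 'I_n}) :
  (#|[set i : 'I_#|{ffun 'I_n -> bool}| | supp_in A (enum_val i)]| <= 2 ^ #|A|)%N.
Proof.
pose f (i : 'I_#|{ffun 'I_n -> bool}|) : {ffun {j : 'I_n | j \in A} -> bool} :=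
  [ffun j => enum_val i (val j)].
rewrite -(@card_in_imset _ _ f); last first.
  move=> i1 i2; rewrite !inE => s1 s2 e; apply: enum_val_inj.
  apply/ffunP => j; case: (boolP (j \in A)) => jA.
    by move/ffunP/(_ (exist _ j jA)): e; rewrite /f !ffunE.
  move/forallP/(_ j): s1; move/forallP/(_ j): s2; rewrite jA /=.
  by move=> /negbTE -> /negbTE ->.
apply: leq_trans (max_card _) _.
by rewrite card_ffun card_bool card_sig.
Qed.

Lemma inv_lb (F : numFieldType) (m b : nat) (P : F) :
  1 <= m%:R * P -> (m <= b)%N -> (b%:R)^-1 <= P.
Proof.
move=> h mb.
have m0 : (0 < m)%N by case: m h mb => //; rewrite mul0r ler10.
have mpos : (0:F) < m%:R by rewrite ltr0n.
have -> : P = (m%:R)^-1 * (m%:R * P) by rewrite mulrA mulVf ?mul1r // gt_eqF.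
apply: (@le_trans _ _ (m%:R^-1)).
  rewrite lef_pV2 ?posrE ?ltr0n ?ler_nat //; exact: leq_trans mb.
by rewrite -[X in X <= _]mulr1 ler_wpM2l // invr_ge0 ltW.
Qed.

Local Open Scope complex_scope.

Lemma pur_lb (R : realType) n (psi : qvec R n) rk (alpha : {set 'I_n}) :
  normalized psi -> is_cp_rank psi rk ->
  (Num.max ((rk%:R : R)^-1) ((2 ^+ minn #|alpha| (n - #|alpha|))^-1))%:C
     <= purity psi alpha.
Proof.
move=> hn [hcp _].
have tr1 := @tr_MM _ _ psi alpha; rewrite hn in tr1.
rewrite purity_tr.
case: lerP => _.
  rewrite fmorphV rmorphXn rmorph_nat -natrX.
  case: (leqP #|alpha| (n - #|alpha|)) => hk.
    apply: inv_lb (@row_bound _ _ _ _ _ (@Mx_row0 _ _ psi alpha) tr1) _.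
    exact: (@card_supp _ alpha).
  idtac.
  apply: inv_lb (@col_bound _ _ _ _ _ (@Mx_col0 _ _ psi alpha) tr1) _.
  have := @card_supp _ (~: alpha).
  have -> : (n - #|alpha| = #|~: alpha|)%N.
    by have := cardsC alpha; rewrite card_ord => e; rewrite -{1}e addKn.
  by [].
rewrite fmorphV rmorph_nat.
apply: inv_lb (@rank_bound _ _ _ _ tr1) _.
exact: rank_Mx.
Qed.


Lemma sum_card (C : nzRingType) n (f : nat -> C) :
  \sum_(A : {set 'I_n}) f #|A| = \sum_(0 <= k < n.+1) 'C(n, k)%:R * f k.
Proof.
rewrite big_mkord (partition_big (fun A : {set 'I_n} => (inord #|A| : 'I_n.+1)) predT) //=.
apply: eq_bigr => k _.
rewrite (eq_bigl (fun A => A \in [set A : {set 'I_n} | #|A| == k])); last first.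
  move=> A; rewrite !inE -val_eqE /= inordK // ltnS.
  by apply: leq_trans (max_card _) _; rewrite card_ord.
transitivity (\sum_(A in [set A : {set 'I_n} | #|A| == k]) f k).
  by apply: eq_bigr => A; rewrite inE => /eqP ->.
by rewrite sumr_const card_draws card_ord mulr_natl.
Qed.

Theorem proposition4 (R : realType) (n : nat) (psi : qvec R n) (rk : nat) :
  normalized psi -> is_cp_rank psi rk ->
  conc_ent psi <= (ce_bound R n rk)%:C.
Proof.
move=> hn hr.
rewrite /conc_ent /ce_bound rmorphB rmorph1 rmorphM fmorphV rmorphXn rmorph_nat.
have h2 : 0 <= ((2 : R[i]) ^+ n)^-1 by rewrite invr_ge0 exprn_ge0 // ler0n.
rewrite lerD2l lerN2 ler_wpM2l //; try exact h2.
rewrite raddf_sum /=.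
under eq_bigr => k _ do rewrite rmorphM rmorph_nat.
rewrite -(@sum_card _ n (fun k => (Num.max ((rk%:R : R)^-1) ((2 ^+ minn k (n - k))^-1))%:C)).
by apply: ler_sum => A _; apply: pur_lb.
Qed.
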